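(* Let $(\Omega,\mathcal A,\mu)$ be a measure space, $X$ a real locally convex space, and $L$ a locally convex space of $\mathcal A$-measurable functions $u:\Omega\to X$ such that (a) $L$ is barreled; (b) for every $A\in\mathcal A$ the map $L\to L$, $u\mapsto\chi_Au$, is defined and continuous; (c) for every $u\in L$ the family $\{\chi_Au:A\in\mathcal A\}$ is bounded in $L$. Let $(\Omega_\alpha)$ be an isotone (or antitone) net in $\mathcal A$. Then the multiplication operators $M_\alpha:L\to L$, $u\mapsto\chi_{\Omega_\alpha}u$, are linear and continuous, and their adjoints $P_\alpha:L'\to L'$ converge pointwise in $\sigma(L',L)$ to a linear, continuous projector $P:L'\to L'$. If moreover $\|\cdot\|_L$ is a seminorm on $L$ such that $\max\{\|u\|_L,\|v\|_L\}\le1$ and $A\in\mathcal A$ imply $\|\chi_Au+\chi_{\Omega\setminus A}v\|_L\le1$, and $\|u'\|_{L'}=\sup_{\|u\|_L\le1}\langle u',u\rangle$ denotes the dual seminorm, then $\|u'\|_{L'}=\|Pu'\|_{L'}+\|(1-P)u'\|_{L'}$ for all $u'\in L'$. *)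

(* Defs.v *)
From HB Require Import structures.
From mathcomp Require Import all_boot all_order all_algebra.
From mathcomp Require Import all_classical all_reals all_analysis.
Set Implicit Arguments. Unset Strict Implicit. Unset Printing Implicit Defensive.
Import Order.TTheory GRing.Theory Num.Theory.
Import numFieldNormedType.Exports.
Local Open Scope classical_set_scope.
Local Open Scope ring_scope.

Section tvs_defs.
Context {R : realType} {E : tvsType R}.

Definition balanced (B : set E) : Prop :=
  forall (l : R) (u : E), `|l| <= 1 -> B u -> B (l *: u).

Definition absorbing (B : set E) : Prop :=
  forall u : E, exists2 r : R, 0 < r & forall l : R, `|l| <= r -> B (l *: u).

Definition barrel (B : set E) : Prop :=
  [/\ closed B, convex_set (B : set (convex_lmodType E)), balanced B & absorbing B].

Definition barreled : Prop := forall B : set E, barrel B -> nbhs (0 : E) B.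

Definition tvs_bounded (B : set E) : Prop :=
  forall U : set E, nbhs (0 : E) U ->
    exists2 r : R, 0 < r & forall l : R, r <= `|l| -> B `<=` (fun x => l *: x) @` U.

Definition cont_dual (f : E -> R) : Prop :=
  (forall (a : R) (u v : E), f (a *: u + v) = a * f u + f v) /\ continuous f.

(** continuity of a map E' -> E' for the strong topology beta(E', E), whose
    neighbourhoods of 0 are generated by the polars of bounded sets *)
Definition strong_dual_continuous (P : (E -> R) -> (E -> R)) : Prop :=
  forall B : set E, tvs_bounded B ->
    exists2 B1 : set E, tvs_bounded B1 &
      forall f : E -> R, cont_dual f -> (forall u, B1 u -> `|f u| <= 1) ->
        forall u, B u -> `|P f u| <= 1.

Definition is_seminorm (n : E -> R) : Prop :=
  (forall u v : E, n (u + v) <= n u + n v) /\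
  (forall (a : R) (u : E), n (a *: u) = `|a| * n u).

Definition dual_seminorm (n : E -> R) (f : E -> R) : \bar R :=
  ereal_sup [set (f u)%:E | u in [set u | n u <= 1]].

End tvs_defs.

Definition top_measurable_fun {d} {T : measurableType d} {R : realType}
  {X : tvsType R} (f : T -> X) : Prop :=
  forall U : set X, open U -> measurable (f @^-1` U).

Definition directed {dI} (I : porderType dI) : Prop :=
  inhabited I /\ forall a b : I, exists c : I, (a <= c)%O /\ (b <= c)%O.

Definition net_cvg {dI} {I : porderType dI} {R : realType} (x : I -> R) (l : R) : Prop :=
  forall e : R, 0 < e -> exists a0 : I, forall a : I, (a0 <= a)%O -> `|x a - l| < e.

(* Main.v *)
Require Import Defs.
From HB Require Import structures.
From mathcomp Require Import all_boot all_order all_algebra.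
From mathcomp Require Import all_classical all_reals all_analysis.
From mathcomp Require Import lra ring.
Import Order.TTheory GRing.Theory Num.Theory.
Import numFieldNormedType.Exports.
Local Open Scope classical_set_scope.
Local Open Scope ring_scope.

Section Gen.
Lemma closed_family (X Y : topologicalType) (I : Type) (h : I -> X -> Y) (S : set Y) :
  (forall i, continuous (h i)) -> closed S -> closed [set u | forall i, S (h i u)].
Proof.
move=> hc Sc u cu i; apply: Sc => B Bn.
have /cu [v [Wv Bv]] : nbhs u (h i @^-1` B) by exact: (hc i u).
by exists (h i v); split => //; exact: Wv.
Qed.

Lemma closed_pre (X Y : topologicalType) (h : X -> Y) (S : set Y) :
  continuous h -> closed S -> closed (h @^-1` S).
Proof.
move=> hc Sc.
have -> : h @^-1` S = [set u | forall i : unit, S ((fun _ => h) i u)].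
  by apply/seteqP; split => x /=; [move=> Sx _|apply].
exact: closed_family.
Qed.

Lemma closure_map (X Y : topologicalType) (h : X -> Y) (K : set X) (S : set Y) :
  continuous h -> closed S -> (forall x, K x -> S (h x)) ->
  forall x, closure K x -> S (h x).
Proof.
move=> hc Sc KS x Kx.
have : closure K `<=` h @^-1` S.
  have e := (closure_id _).1 (@closed_pre X Y h S hc Sc).
  by rewrite [X in _ `<=` X]e; exact: closureS.
exact.
Qed.
End Gen.

Section Nets.
Variables (R : realType) (dI : Order.disp_t) (I : porderType dI) (I_dir : directed I).

Lemma net_unique (x : I -> R) l1 l2 : net_cvg x l1 -> net_cvg x l2 -> l1 = l2.
Proof.
move=> c1 c2; have [//|ne] := eqVneq l1 l2; exfalso.
have d0 : 0 < `|l1 - l2| by rewrite normr_gt0 subr_eq0.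
have e0 : 0 < `|l1 - l2| / 2 by rewrite divr_gt0.
have [a1 h1] := c1 _ e0; have [a2 h2] := c2 _ e0.
have [c [ac1 ac2]] := I_dir.2 a1 a2.
have := h1 c ac1; have := h2 c ac2.
rewrite !ltr_norml.
have [h|h] := lerP 0 (l1 - l2).
  rewrite (ger0_norm h) => ? ?; lra.
rewrite (ltr0_norm h) => ? ?; lra.
Qed.

Lemma net_cauchy (x : I -> R) :
  (forall e, 0 < e -> exists a0, forall b, (a0 <= b)%O -> `|x b - x a0| < e) ->
  exists l, net_cvg x l.
Proof.
move=> H.
pose E := [set y : R | exists a0, forall b, (a0 <= b)%O -> y <= x b].
have [a1 h1] := H 1 ltr01.
have ubE : forall a0 e, (forall b, (a0 <= b)%O -> `|x b - x a0| < e) -> ubound E (x a0 + e).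
  move=> a0 e ha y [a2 h2].
  have [c [ac0 ac2]] := I_dir.2 a0 a2.
  have := ha c ac0; have := h2 c ac2; rewrite ltr_norml => ? ?; lra.
have hasE : has_ubound E by exists (x a1 + 1); exact: ubE.
have neE : E !=set0.
  exists (x a1 - 1), a1 => b /h1; rewrite ltr_norml => ?; lra.
exists (sup E) => e e0.
have e20 : 0 < e / 2 by rewrite divr_gt0.
have [a0 h0] := H _ e20.
have le1 : sup E <= x a0 + e / 2 by apply: ge_sup => //; exact: ubE.
have le2 : x a0 - e / 2 <= sup E.
  apply: ub_le_sup => //; exists a0 => b /h0; rewrite ltr_norml => ?; lra.
exists a0 => b /h0; rewrite !ltr_norml => ?; lra.
Qed.

Variables (d : measure_display) (T : measurableType d) (nu : set T -> R) (M : R).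
Hypothesis nuD : forall A B, measurable A -> measurable B -> A `&` B = set0 ->
  nu (A `|` B) = nu A + nu B.
Hypothesis nuB : forall A, measurable A -> `|nu A| <= M.

Lemma nu0 : nu set0 = 0.
Proof.
have := nuD set0 set0 measurable0 measurable0 (setI0 _); rewrite setU0.
move=> h; have : nu set0 + nu set0 - nu set0 = nu set0 - nu set0 by rewrite -h.
by rewrite addrK subrr.
Qed.

Lemma iso_cauchy (Om : I -> set T) : (forall a, measurable (Om a)) ->
  (forall a b : I, (a <= b)%O -> Om a `<=` Om b) ->
  forall e, 0 < e -> exists a0, forall b, (a0 <= b)%O -> `|nu (Om b) - nu (Om a0)| < e.
Proof.
move=> Omm Omi e e0; apply: contrapT => H.
have H' : forall a0, exists b, (a0 <= b)%O /\ e <= `|nu (Om b) - nu (Om a0)|.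
  move=> a0; apply: contrapT => nb; apply: H; exists a0 => b ab.
  rewrite ltNge; apply/negP => eb; apply: nb; exists b; split => //.
have diff : forall a b, (a <= b)%O -> nu (Om b) = nu (Om a) + nu (Om b `\` Om a).
  move=> a b ab.
  by rewrite -{1}(setDUK (Omi a b ab)) nuD //; [exact: measurableD | rewrite setDIK].
have claim : forall k : nat, forall a0, exists a, (a0 <= a)%O /\ exists S1 S2,
    [/\ measurable S1, measurable S2, S1 `<=` Om a `\` Om a0, S2 `<=` Om a `\` Om a0 &
     k%:R * e <= nu S1 - nu S2].
  elim=> [|k IH] a0.
    exists a0; split => //; exists set0, set0.
    split; try exact: measurable0; try exact: sub0set.
    by rewrite mul0r subrr.
  have [b [ab eb]] := H' a0.
  pose D := Om b `\` Om a0.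
  have mD : measurable D by exact: measurableD.
  have eD : e <= `|nu D| by move: eb; rewrite (diff a0 b ab) addrAC subrr add0r.
  have [a [ba [S1 [S2 [m1 m2 s1 s2 hk]]]]] := IH b.
  exists a; split; first exact: le_trans ab ba.
  have sub : forall S, S `<=` Om a `\` Om b -> S `<=` Om a `\` Om a0.
    move=> S SS x /SS [xa xb]; split => // xa0; apply: xb; exact: (Omi a0 b ab).
  have Dsub : D `<=` Om a `\` Om a0.
    move=> x [xb xa0]; split => //; exact: (Omi b a ba).
  have disj : forall S, S `<=` Om a `\` Om b -> S `&` D = set0.
    move=> S SS; apply/seteqP; split => // x [/SS [_ xb] [xb' _]] //.
  have [Dp|Dn] := lerP 0 (nu D).
    exists (S1 `|` D), S2; split.
    - exact: measurableU.
    - done.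
    - by move=> x [/(sub _ s1)|/Dsub].
    - exact: sub.
    - rewrite nuD //; last exact: disj.
      move: eD; rewrite (ger0_norm Dp) -addn1 natrD => ?; lra.
  exists S1, (S2 `|` D); split.
  - done.
  - exact: measurableU.
  - exact: sub.
  - by move=> x [/(sub _ s2)|/Dsub].
  - rewrite nuD //; last exact: disj.
    move: eD; rewrite (ltr0_norm Dn) -addn1 natrD => ?; lra.
have := truncnS_gt (2 * M / e).
set k := (Num.truncn _).+1 => hk.
have {}hk : 2 * M < k%:R * e by rewrite -ltr_pdivrMr.
case: I_dir => -[a0] _.
have [a [_ [S1 [S2 [m1 m2 _ _ h]]]]] := claim k a0.
have := nuB _ m1; have := nuB _ m2; rewrite !ler_norml => ? ?; lra.
Qed.
End Nets.

Section Main.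
Variables (R : realType) (d : measure_display) (T : measurableType d) (X L : tvsType R).
Variable ev : L -> T -> X.
Hypothesis ev_inj : injective ev.
Hypothesis ev_lin : forall (a : R) (u v : L), ev (a *: u + v) = (fun t => a *: ev u t + ev v t).
Variable m : set T -> L -> L.
Hypothesis m_def : forall (A : set T) (u : L), measurable A ->
  ev (m A u) = (fun t => \1_A t *: ev u t).
Hypothesis m_cont : forall A : set T, measurable A -> continuous (m A).
Hypothesis m_bnd : forall u : L, tvs_bounded [set m A u | A in [set A : set T | measurable A]].
Hypothesis L_barreled : barreled (E := L).
Variables (dI : Order.disp_t) (I : porderType dI).
Hypothesis I_dir : directed I.
Variable Om : I -> set T.
Hypothesis Om_meas : forall a : I, measurable (Om a).
Hypothesis Om_mono : (forall a b : I, (a <= b)%O -> Om a `<=` Om b) \/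
             (forall a b : I, (a <= b)%O -> Om b `<=` Om a).
Local Open Scope convex_scope.

Lemma conv_eq (x y : convex_lmodType L) (p : {i01 R}) :
  (x <| p |> y) = (p%:num *: (x : L) + (1 - p%:num) *: (y : L) : L).
Proof. by []. Qed.

Definition cvx (K : set L) := forall x y (t : R), 0 <= t -> t <= 1 -> K x -> K y ->
  K (t *: x + (1 - t) *: y).

Lemma cvx_convex (K : set L) : cvx K -> convex_set (K : set (convex_lmodType L)).
Proof.
move=> cK x y p; rewrite !inE => Kx Ky; rewrite conv_eq.
by apply: cK.
Qed.

Lemma convex_cvx (K : set L) : convex_set (K : set (convex_lmodType L)) -> cvx K.
Proof.
move=> cK x y t t0 t1 Kx Ky.
have := cK x y (Itv01 t0 t1); rewrite !inE conv_eq; exact.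
Qed.

Lemma scalel_cont (l : R) : continuous (fun x : L => l *: x).
Proof.
move=> x; have [->|l0] := eqVneq l 0.
  under eq_fun do rewrite scale0r.
  rewrite ?scale0r; exact: cvg_cst.
move=> B /= Bn.
have := nbhsZ (x := l *: x) (r := l^-1) (invr_neq0 l0) Bn.
rewrite scalerA mulVf // scale1r; apply: filterS => y [b Bb <-].
by rewrite /= scalerA divff // scale1r.
Qed.

Lemma transl_cont (c : L) : continuous (fun x : L => x + c).
Proof.
move=> x B /= Bn.
have := nbhsB (z := x + c) (-c) Bn.
rewrite addrC addrK; apply: filterS => y [b Bb <-].
by rewrite /= addrC addNKr.
Qed.

Lemma aff_cont (a : R) (c : L) : continuous (fun x : L => a *: x + c).
Proof.
move=> x B /= Bn.
have := transl_cont c (a *: x) B Bn.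
move=> /(scalel_cont a x _); exact.
Qed.

Lemma cvx_bal_aux (W : set L) : cvx W -> W 0 -> forall x, W x -> W (- x) ->
  forall l : R, `|l| <= 1 -> W (l *: x).
Proof.
move=> cW W0 x Wx Wnx l l1.
have [l0|l0] := leP 0 l.
  have := cW x 0 l l0 _ Wx W0; rewrite scaler0 addr0; apply.
  by rewrite -(ger0_norm l0).
have := cW (- x) 0 (- l) _ _ Wnx W0; rewrite scaler0 addr0 scaleNr scalerN opprK.
apply; first by rewrite oppr_ge0 ltW.
by rewrite -(ltr0_norm l0).
Qed.

Lemma closure_bal (K : set L) : balanced K -> balanced (closure K).
Proof.
move=> bK l u l1 Ku.
apply: (@closure_map _ _ (fun x => l *: x) K) => //.
- exact: scalel_cont.
- exact: closed_closure.
- by move=> x Kx; apply: subset_closure; exact: bK.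
Qed.

Lemma closure_cvx (K : set L) : cvx K -> cvx (closure K).
Proof.
move=> cK x y t t0 t1 Kx Ky.
have step1 : forall x', K x' -> closure K (t *: x' + (1 - t) *: y).
  move=> x' Kx'.
  have -> : t *: x' + (1 - t) *: y = (1 - t) *: y + t *: x' by rewrite addrC.
  apply: (@closure_map _ _ (fun z => (1 - t) *: z + t *: x') K) => //.
  - exact: aff_cont.
  - exact: closed_closure.
  - move=> z Kz; apply: subset_closure; rewrite addrC; exact: cK.
apply: (@closure_map _ _ (fun z => t *: z + (1 - t) *: y) K) => //.
- exact: aff_cont.
- exact: closed_closure.
Qed.

Lemma good_nbhs (U : set L) : nbhs (0 : L) U ->
  exists C : set L, [/\ nbhs (0 : L) C, closed C, cvx C, balanced C & C `<=` U].
Proof.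
move=> U0.
have [V V0 VU] : filter_from (nbhs (0 : L)) closure U by exact: (@uniform_regular L 0).
have [Bs Bcvx [Bopen Bbasis]] := @locally_convex R L.
have [W [BW W0] WV] := Bbasis 0 V V0.
have nW : nbhs (0 : L) W by apply: open_nbhs_nbhs; split => //; exact: Bopen.
have cW : cvx W by apply: convex_cvx; apply: Bcvx; rewrite inE.
pose K := [set x : L | W x /\ W (- x)].
have nK : nbhs (0 : L) K.
  apply: filterI => //.
  have := @opp_continuous L 0 W; rewrite oppr0; exact.
have cK : cvx K.
  move=> x y s s0 s1 [Wx Wnx] [Wy Wny]; split; first exact: cW.
  by rewrite opprD -!scalerN; exact: cW.
have bK : balanced K.
  move=> l u l1 [Wu Wnu]; split.
    exact: (@cvx_bal_aux W cW W0 u Wu Wnu l l1).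
  rewrite -scalerN; apply: (@cvx_bal_aux W cW W0 (- u) Wnu _ l l1).
  by rewrite opprK.
exists (closure K); split.
- by apply: filterS nK; exact: subset_closure.
- exact: closed_closure.
- exact: closure_cvx.
- exact: closure_bal.
- apply: subset_trans VU; apply: closureS => x [Wx _]; exact: WV.
Qed.

Lemma comp_cont (X1 Y1 Z1 : topologicalType) (f : X1 -> Y1) (g : Y1 -> Z1) :
  continuous f -> continuous g -> continuous (g \o f).
Proof. by move=> fc gc x B Bn; have := gc (f x) B Bn; move/(fc x _); exact. Qed.

Lemma lin_cont (g : L -> R) : (forall a u v, g (a *: u + v) = a * g u + g v) ->
  forall W, nbhs (0 : L) W -> (forall u, W u -> `|g u| <= 1) -> continuous g.
Proof.
move=> gl W W0 gW x.
apply/cvgrPdist_lt => e e0.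
have e20 : 0 < e / 2 by rewrite divr_gt0.
have := nbhsB x (nbhs0Z (lt0r_neq0 e20) W0); rewrite addr0.
apply: filterS => y [z [w Ww <-] <-] /=.
rewrite [x + _]addrC gl.
have -> : g x - (e / 2 * g w + g x) = - (e / 2 * g w) by ring.
rewrite normrN normrM gtr0_norm //.
have := gW w Ww => h.
rewrite (@le_lt_trans _ _ (e / 2 * 1)) //; first by rewrite ler_wpM2l // ltW.
by rewrite mulr1 ltr_pdivrMr // ltr_pMr // ltr1n.
Qed.

Lemma dual_lin (f : L -> R) : cont_dual f ->
  [/\ f 0 = 0, forall u v, f (u + v) = f u + f v & forall a u, f (a *: u) = a * f u].
Proof.
move=> [fl _].
have f0 : f 0 = 0.
  have := fl 1 0 0; rewrite scale1r addr0 mul1r => /(congr1 (fun z => z - f 0)).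
  by rewrite subrr addrK => <-.
split => //.
- by move=> u v; have := fl 1 u v; rewrite scale1r mul1r.
- by move=> a u; have := fl a u 0; rewrite addr0 f0 addr0.
Qed.

Lemma dual_nbhs (f : L -> R) : cont_dual f -> nbhs (0 : L) [set u | `|f u| < 1].
Proof.
move=> cf; have [f0 _ _] := dual_lin f cf.
have := cf.2 0; move/cvgrPdist_lt => /(_ 1 ltr01).
by rewrite f0; apply: filterS => u; rewrite sub0r normrN.
Qed.

Lemma bounded_dual (f : L -> R) (B : set L) : cont_dual f -> tvs_bounded B ->
  exists2 C, 0 < C & forall u, B u -> `|f u| <= C.
Proof.
move=> cf bB; have [f0 _ fZ] := dual_lin f cf.
have [r r0 h] := bB _ (dual_nbhs f cf).
exists r => // u /(h r); rewrite gtr0_norm // lexx => /(_ isT) [w /= fw <-].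
by rewrite fZ normrM gtr0_norm // -{2}(mulr1 r) ler_wpM2l // ltW.
Qed.
Lemma net_lin (c : R) (x y : I -> R) l k : net_cvg x l -> net_cvg y k ->
  net_cvg (fun a => c * x a + y a) (c * l + k).
Proof.
move=> cx cy e e0.
have e1 : 0 < e / 2 / (`|c| + 1) by rewrite !divr_gt0 // ltr_wpDl.
have e2 : 0 < e / 2 by rewrite divr_gt0.
have [a1 h1] := cx _ e1; have [a2 h2] := cy _ e2.
have [a0 [a10 a20]] := I_dir.2 a1 a2.
exists a0 => a a0a.
have := h1 a (le_trans a10 a0a); have := h2 a (le_trans a20 a0a) => hy hx.
have -> : c * x a + y a - (c * l + k) = c * (x a - l) + (y a - k) by ring.
rewrite (le_lt_trans (ler_normD _ _)) // normrM.
have : `|c| * `|x a - l| <= e / 2.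
  have hc : `|c| * `|x a - l| <= (`|c| + 1) * `|x a - l| by rewrite ler_wpM2r // lerDl.
  apply: le_trans hc _; rewrite -ler_pdivlMl ?ltr_wpDl //.
  by rewrite mulrC ltW.
move=> ?; lra.
Qed.

Lemma net_cst (c : R) : net_cvg (fun _ : I => c) c.
Proof. move=> e e0; case: I_dir => -[a0] _; exists a0 => a _; by rewrite subrr normr0. Qed.

Lemma net_ev (x y : I -> R) l a0 : (forall b, (a0 <= b)%O -> x b = y b) ->
  net_cvg y l -> net_cvg x l.
Proof.
move=> hxy cy e e0; have [a1 h1] := cy e e0.
have [c [a0c a1c]] := I_dir.2 a0 a1.
exists c => b cb; rewrite hxy; [exact: h1 (le_trans a1c cb)|exact: le_trans a0c cb].
Qed.

Lemma net_le (x : I -> R) l B : (forall a, x a <= B) -> net_cvg x l -> l <= B.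
Proof.
move=> xB cx; rewrite leNgt; apply/negP => lB.
have lB0 : 0 < l - B by rewrite subr_gt0.
have [a0 h] := cx (l - B) lB0.
have := h a0 (lexx _); have := xB a0; rewrite ltr_norml => ? ?; lra.
Qed.

Lemma net_le_norm (x : I -> R) l : (forall a, `|x a| <= 1) -> net_cvg x l -> `|l| <= 1.
Proof.
move=> xB cx; rewrite ler_norml; apply/andP; split.
- have : net_cvg (fun a => (-1) * x a + 0) ((-1) * l + 0) by apply: net_lin => //; exact: net_cst.
  move/net_le => /(_ 1); rewrite mulN1r addr0 => h.
  suff : - l <= 1 by move=> ?; lra.
  apply: h => a; have := xB a; rewrite ler_norml => ?; lra.
- apply: (@net_le x l 1 _ cx) => a; have := xB a; rewrite ler_norml => ?; lra.
Qed.
Lemma ev0 t : ev 0 t = 0.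
Proof.
have := congr1 (fun g => g t) (ev_lin 1 0 0); rewrite /= !scale1r addr0.
move=> /(congr1 (fun z => z - ev 0 t)).
by rewrite subrr addrK => <-.
Qed.

Lemma evD u v t : ev (u + v) t = ev u t + ev v t.
Proof. by have := congr1 (fun g => g t) (ev_lin 1 u v); rewrite /= !scale1r. Qed.

Lemma evZ a u t : ev (a *: u) t = a *: ev u t.
Proof. by have := congr1 (fun g => g t) (ev_lin a u 0); rewrite /= addr0 ev0 addr0. Qed.

Lemma ev_ext u v : (forall t, ev u t = ev v t) -> u = v.
Proof. by move=> h; apply: ev_inj; apply: funext. Qed.

Lemma mcomp A u t : measurable A -> ev (m A u) t = \1_A t *: ev u t.
Proof. by move=> mA; rewrite m_def. Qed.

Lemma mlin A : measurable A -> forall a u v, m A (a *: u + v) = a *: m A u + m A v.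
Proof.
move=> mA a u v; apply: ev_ext => t.
rewrite mcomp // !evD !evZ !mcomp // scalerDr; congr (_ + _).
by rewrite !scalerA mulrC.
Qed.

Lemma mZ A a u : measurable A -> m A (a *: u) = a *: m A u.
Proof. by move=> mA; apply: ev_ext => t; rewrite mcomp // !evZ mcomp // !scalerA mulrC. Qed.

Lemma mC A u : measurable A -> m A u + m (~` A) u = u.
Proof.
move=> mA; apply: ev_ext => t; rewrite evD !mcomp //; last exact: measurableC.
rewrite -scalerDl !indicE in_setC; case: (t \in A) => /=;
  by rewrite ?mulr1n ?mulr0n ?addr0 ?add0r scale1r.
Qed.

Lemma mI A B u : measurable A -> measurable B -> m A (m B u) = m (A `&` B) u.
Proof.
move=> mA mB; apply: ev_ext => t; rewrite !mcomp //; last exact: measurableI.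
by rewrite scalerA indicI.
Qed.

Lemma fm_bnd f u : cont_dual f ->
  exists2 C, 0 < C & forall A, measurable A -> `|f (m A u)| <= C.
Proof.
move=> cf; have [C C0 hC] := bounded_dual f _ cf (m_bnd u).
by exists C => // A mA; apply: hC; exists A.
Qed.

Lemma fm_cauchy f u : cont_dual f -> forall e, 0 < e -> exists a0, forall b, (a0 <= b)%O ->
  `|f (m (Om b) u) - f (m (Om a0) u)| < e.
Proof.
move=> cf; have [C C0 hC] := fm_bnd f u cf.
have [f0 fD fZ] := dual_lin f cf.
have nuD : forall A B, measurable A -> measurable B -> A `&` B = set0 ->
    f (m (A `|` B) u) = f (m A u) + f (m B u).
  move=> A B mA mB AB; rewrite -fD; congr f; apply: ev_ext => t.
  rewrite evD !mcomp //; last exact: measurableU.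
  rewrite -scalerDl; congr (_ *: _); rewrite !indicE in_setU.
  have [tA|tA] := boolP (t \in A); have [tB|tB] := boolP (t \in B) => /=;
    rewrite ?mulr1n ?mulr0n ?addr0 ?add0r //.
  have : t \in A `&` B by rewrite in_setI tA tB.
  by rewrite AB in_set0.
case: Om_mono => [iso|anti].
  exact: (@iso_cauchy R dI I I_dir d T (fun A => f (m A u)) C nuD hC Om Om_meas iso).
move=> e e0.
have Omm' : forall a, measurable (~` Om a) by move=> a; exact: measurableC.
have iso' : forall a b : I, (a <= b)%O -> ~` Om a `<=` ~` Om b.
  by move=> a b ab; apply: subsetC; exact: anti.
have [a0 h] := @iso_cauchy R dI I I_dir d T (fun A => f (m A u)) C nuD hC
  (fun a => ~` Om a) Omm' iso' e e0.
exists a0 => b ab; have := h b ab.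
have eq : forall a, f (m (Om a) u) = f u - f (m (~` Om a) u).
  by move=> a; rewrite -{2}(mC (Om a) u (Om_meas a)) fD addrK.
rewrite !eq.
have -> : f u - f (m (~` Om b) u) - (f u - f (m (~` Om a0) u)) =
  f (m (~` Om a0) u) - f (m (~` Om b) u) by ring.
by rewrite distrC.
Qed.

Definition P (f : L -> R) (u : L) : R := xget 0 (net_cvg (fun a => f (m (Om a) u))).

Lemma P_eq f u l : net_cvg (fun a => f (m (Om a) u)) l -> P f u = l.
Proof.
move=> h; have := xgetPex 0 (ex_intro _ l h).
by move/(@net_unique R dI I I_dir _ _ _) => /(_ _ h).
Qed.

Lemma P_cvg f u : cont_dual f -> net_cvg (fun a => f (m (Om a) u)) (P f u).
Proof.
move=> cf; have [l h] := @net_cauchy R dI I I_dir _ (fm_cauchy f u cf).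
by rewrite (P_eq _ _ _ h).
Qed.

Lemma P_lin f : cont_dual f -> forall a u v, P f (a *: u + v) = a * P f u + P f v.
Proof.
move=> cf a u v; have [_ fD fZ] := dual_lin f cf.
apply: P_eq.
have -> : (fun b => f (m (Om b) (a *: u + v))) =
    (fun b => a * f (m (Om b) u) + f (m (Om b) v)).
  by apply: funext => b; rewrite mlin // fD fZ.
exact: net_lin _ _ _ _ _ (P_cvg f u cf) (P_cvg f v cf).
Qed.

Lemma W_barrel f : cont_dual f -> barrel [set u | forall a, `|f (m (Om a) u)| <= 1].
Proof.
move=> cf; have [f0 fD fZ] := dual_lin f cf.
split.
- apply: (@closed_family L R I (fun a u => f (m (Om a) u)) [set r : R | `|r| <= 1]).
    by move=> a; exact: (comp_cont _ _ _ _ _ (m_cont _ (Om_meas a)) cf.2).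
  have c1 : closed [set r : R | r <= 1] by exact: closed_le.
  have c2 : continuous (Num.norm : R -> R) by exact: norm_continuous.
  exact: (closed_pre _ _ _ _ c2 c1).
- apply: cvx_convex => x y t t0 t1 hx hy a.
  rewrite mlin // mZ // fD !fZ.
  have := hx a; have := hy a => h1 h2.
  have t1' : 0 <= 1 - t by rewrite subr_ge0.
  rewrite (le_trans (ler_normD _ _)) // !normrM (ger0_norm t0) (ger0_norm t1').
  have H3 : t * `|f (m (Om a) x)| <= t by rewrite -{2}(mulr1 t) ler_wpM2l.
  have H4 : (1 - t) * `|f (m (Om a) y)| <= 1 - t.
    by rewrite -{2}(mulr1 (1 - t)) ler_wpM2l ?subr_ge0.
  by apply: le_trans (lerD H3 H4) _; rewrite addrC subrK.
- move=> l u hl hu a; rewrite mZ // fZ normrM.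
  by rewrite -(mulr1 1) ler_pM.
- move=> u; have [C C0 hC] := fm_bnd f u cf.
  exists C^-1; first by rewrite invr_gt0.
  move=> l hl a; rewrite mZ // fZ normrM.
  rewrite -(mulVf (lt0r_neq0 C0)) ler_pM //; exact: hC.
Qed.

Lemma P_dual f : cont_dual f -> cont_dual (P f).
Proof.
move=> cf; split; first by move=> a u v; exact: P_lin.
apply: (lin_cont (P f) (P_lin f cf) _ (L_barreled _ (W_barrel f cf))).
move=> u hu; apply: (net_le_norm _ _ _ (P_cvg f u cf)) => a; exact: hu.
Qed.

Lemma P_linf (c : R) f g : cont_dual f -> cont_dual g ->
  P (fun u => c * f u + g u) = (fun u => c * P f u + P g u).
Proof.
move=> cf cg; apply: funext => u; apply: P_eq.
exact: net_lin _ _ _ _ _ (P_cvg f u cf) (P_cvg g u cg).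
Qed.

Lemma P_strong : strong_dual_continuous P.
Proof.
move=> B bB.
exists [set v | exists a u, B u /\ v = m (Om a) u]; last first.
  move=> f cf hf u Bu; apply: (net_le_norm _ _ _ (P_cvg f u cf)) => a.
  by apply: hf; exists a, u.
move=> U U0; have [C [C0 Ccl Ccvx Cbal CU]] := good_nbhs U U0.
pose W := [set u | forall a, C (m (Om a) u)].
have bW : barrel W.
  split.
  - apply: (@closed_family L L I (fun a => m (Om a)) C) => // a; exact: m_cont.
  - apply: cvx_convex => x y t t0 t1 hx hy a; rewrite mlin // mZ //; exact: Ccvx.
  - move=> l u hl hu a; rewrite mZ //; exact: Cbal.
  - move=> u; have [r r0 hr] := m_bnd u C C0.
    exists r^-1; first by rewrite invr_gt0.
    move=> l hl a; rewrite mZ //.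
    have [->|l0] := eqVneq l 0; first by rewrite scale0r; exact: nbhs_singleton.
    have rl : r <= `|l^-1|.
      rewrite normrV ?unitfE // -(invrK r) lef_pV2 ?posrE ?invr_gt0 ?normr_gt0 //.
    have [c Cc e] := hr _ rl (m (Om a) u) (ex_intro2 _ _ (Om a) (Om_meas a) erefl).
    by rewrite -e scalerA mulfV // scale1r.
have W0 := L_barreled _ bW.
have [r r0 hr] := bB W W0.
exists r => // l hl v [a [u [Bu ->]]].
have [w Ww e] := hr l hl u Bu.
exists (m (Om a) w); first exact: CU (Ww a).
by rewrite -e mZ.
Qed.

Lemma P_idem f : cont_dual f -> P (P f) = P f.
Proof.
move=> cf; apply: funext => u; apply: P_eq.
case: Om_mono => [iso|anti].
  have h : forall a, P f (m (Om a) u) = f (m (Om a) u).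
    move=> a; apply: P_eq.
    apply: (net_ev _ (fun _ => f (m (Om a) u)) _ a); last exact: net_cst.
    by move=> b ab; rewrite mI // setIidr //; exact: iso.
  have -> : (fun a => P f (m (Om a) u)) = (fun a => f (m (Om a) u)) by apply: funext.
  exact: P_cvg.
have h : forall a, P f (m (Om a) u) = P f u.
  move=> a; apply: P_eq.
  apply: (net_ev _ (fun b => f (m (Om b) u)) _ a); last exact: P_cvg.
  by move=> b ab; rewrite mI // setIidl //; exact: anti.
have -> : (fun a => P f (m (Om a) u)) = (fun a => P f u) by apply: funext.
exact: net_cst.
Qed.

Lemma P_norm : forall n : L -> R, is_seminorm n ->
  (forall (A : set T) (u v : L), measurable A -> n u <= 1 -> n v <= 1 ->
     n (m A u + m (~` A) v) <= 1) ->
  forall f, cont_dual f ->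
    dual_seminorm n f =
      (dual_seminorm n (P f) + dual_seminorm n (fun u => (f u - P f u)%R))%E.
Proof.
move=> n [nD nZ] hn f cf.
have n0 : n 0 <= 1 by have := nZ 0 0; rewrite scale0r normr0 mul0r => ->.
have [f0 fD fZ] := dual_lin f cf.
have cPf := P_dual f cf.
have [Pf0 _ _] := dual_lin (P f) cPf.
set D := dual_seminorm n.
have Dge0 : forall g : L -> R, g 0 = 0 -> (0 <= D g)%E.
  move=> g g0; apply: ereal_sup_ubound; exists 0 => //; by rewrite g0.
have key : forall u v, n u <= 1 -> n v <= 1 -> ((P f u + (f v - P f v))%:E <= D f)%E.
  move=> u v nu nv.
  have := Dge0 f f0; case E: (D f) => [s| |] // _; last by rewrite leey.
  rewrite lee_fin.
  apply: (net_le (fun a => f (m (Om a) u + m (~` Om a) v)) _ s).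
    move=> a; rewrite -lee_fin -E; apply: ereal_sup_ubound.
    by exists (m (Om a) u + m (~` Om a) v) => //; exact: hn.
  have hx : (fun a => f (m (Om a) u + m (~` Om a) v)) =
      (fun a => 1 * f (m (Om a) u) + ((-1) * f (m (Om a) v) + f v)).
    apply: funext => a.
    have e2 : f (m (~` Om a) v) = f v - f (m (Om a) v).
      by rewrite -{2}(mC (Om a) v (Om_meas a)) fD; lra.
    by rewrite fD e2; ring.
  rewrite hx.
  have -> : P f u + (f v - P f v) = 1 * P f u + ((-1) * P f v + f v) by ring.
  exact: net_lin _ _ _ _ _ (P_cvg f u cf) (net_lin _ _ _ _ _ (P_cvg f v cf) (net_cst (f v))).
apply: le_anti; apply/andP; split.
  apply: ge_ereal_sup => _ [u nu <-].
  have -> : f u = P f u + (f u - P f u) by ring.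
  by rewrite EFinD; apply: leeD; apply: ereal_sup_ubound; exists u.
have := Dge0 f f0; case E: (D f) => [s| |] // _; last by rewrite leey.
have h1 : forall v, n v <= 1 -> (D (P f) <= (s - (f v - P f v))%:E)%E.
  move=> v nv; apply: ge_ereal_sup => _ [u nu <-]; rewrite lee_fin.
  have := key u v nu nv; rewrite E lee_fin => ?; lra.
have := Dge0 (P f) Pf0; have := h1 0 n0.
case E1: (D (P f)) => [s1| |] // hs1 _.
have h2 : (D (fun u => (f u - P f u)%R) <= (s - s1)%:E)%E.
  apply: ge_ereal_sup => _ [v nv <-]; rewrite lee_fin.
  have := h1 v nv; rewrite E1 lee_fin => ?; lra.
apply: le_trans (leeD (lexx _) h2) _.
by rewrite -EFinD lee_fin; lra.
Qed.

Lemma main_all :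
  (forall a : I, linear (m (Om a)) /\ continuous (m (Om a))) /\
  exists P : (L -> R) -> (L -> R),
    [/\ (forall f, cont_dual f -> cont_dual (P f)) /\
        (forall (c : R) f g, cont_dual f -> cont_dual g ->
           P (fun u => c * f u + g u) = (fun u => c * P f u + P g u)),
        strong_dual_continuous P,
        (forall f, cont_dual f -> P (P f) = P f),
        (forall f, cont_dual f -> forall u : L,
           net_cvg (fun a : I => f (m (Om a) u)) (P f u)) &
        (forall n : L -> R, is_seminorm n ->
           (forall (A : set T) (u v : L), measurable A -> n u <= 1 -> n v <= 1 ->
              n (m A u + m (~` A) v) <= 1) ->
           forall f, cont_dual f ->
             dual_seminorm n f =
               (dual_seminorm n (P f) + dual_seminorm n (fun u => (f u - P f u)%R))%E)].
Proof.
split.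
  move=> a; split; last exact: m_cont.
  by move=> c u v; exact: mlin.
exists P; split.
- split; [exact: P_dual | move=> c f g cf cg; exact: P_linf].
- exact: P_strong.
- exact: P_idem.
- move=> f cf u; exact: P_cvg.
- exact: P_norm.
Qed.

End Main.
Theorem propositionA1
  (R : realType) (d : measure_display) (T : measurableType d)
  (mu : {measure set T -> \bar R})
  (X : tvsType R) (L : tvsType R)
  (* L is a space of measurable functions T -> X: ev identifies u with a function *)
  (ev : L -> T -> X)
  (ev_inj : injective ev)
  (ev_lin : forall (a : R) (u v : L),
      ev (a *: u + v) = (fun t => a *: ev u t + ev v t))
  (ev_meas : forall u : L, top_measurable_fun (ev u))
  (* (a) *)
  (L_barreled : barreled (E := L))
  (* (b) u |-> \1_A u is defined (as m A) and continuous *)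
  (m : set T -> L -> L)
  (m_def : forall (A : set T) (u : L), measurable A ->
      ev (m A u) = (fun t => \1_A t *: ev u t))
  (m_cont : forall A : set T, measurable A -> continuous (m A))
  (* (c) *)
  (m_bnd : forall u : L, tvs_bounded [set m A u | A in [set A : set T | measurable A]])
  (* the isotone or antitone net *)
  (dI : Order.disp_t) (I : porderType dI) (I_dir : directed I)
  (Om : I -> set T) (Om_meas : forall a : I, measurable (Om a))
  (Om_mono : (forall a b : I, (a <= b)%O -> Om a `<=` Om b) \/
             (forall a b : I, (a <= b)%O -> Om b `<=` Om a)) :
  (forall a : I, linear (m (Om a)) /\ continuous (m (Om a))) /\
  exists P : (L -> R) -> (L -> R),
    [/\ (forall f, cont_dual f -> cont_dual (P f)) /\
        (forall (c : R) f g, cont_dual f -> cont_dual g ->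
           P (fun u => c * f u + g u) = (fun u => c * P f u + P g u)),
        strong_dual_continuous P,
        (forall f, cont_dual f -> P (P f) = P f),
        (forall f, cont_dual f -> forall u : L,
           net_cvg (fun a : I => f (m (Om a) u)) (P f u)) &
        (forall n : L -> R, is_seminorm n ->
           (forall (A : set T) (u v : L), measurable A -> n u <= 1 -> n v <= 1 ->
              n (m A u + m (~` A) v) <= 1) ->
           forall f, cont_dual f ->
             dual_seminorm n f =
               (dual_seminorm n (P f) + dual_seminorm n (fun u => (f u - P f u)%R))%E)].
Proof.
move=> *; eapply main_all; eassumption.
Qed.
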